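(* For all $P,Q\in\Gamma_n$, $$0\le \tfrac12 \Delta(P\|Q)\le M_{SG}(P\|Q)\qquad\text{and}\qquad 0\le \tfrac12\xi_{\Delta}(P\|Q)\le \xi_{SG}(P\|Q).$$
   Context: $\Gamma_n=\{P=(p_1,\dots,p_n): p_i>0,\ \sum_i p_i=1\}$, $n\ge2$. For $f:(0,\infty)\to\mathbb{R}$, $C_f(P\|Q)=\sum_{i=1}^n q_i f(p_i/q_i)$; for differentiable $f$, $E_f(P\|Q)=\sum_{i=1}^n (p_i-q_i) f'(p_i/q_i)$ and $\xi_f=E_f-C_f$. With $f_{SG}(x)=\sqrt{(x^2+1)/2}-\sqrt x$ and $f_\Delta(x)=\frac{(x-1)^2}{x+1}$: $M_{SG}=C_{f_{SG}}=\sum_i\big(\sqrt{(p_i^2+q_i^2)/2}-\sqrt{p_iq_i}\big)$, $\Delta=C_{f_\Delta}=\sum_i\frac{(p_i-q_i)^2}{p_i+q_i}$, $\xi_{SG}=\xi_{f_{SG}}$, $\xi_\Delta=\xi_{f_\Delta}$. *)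

(* Defs.v *)
From Stdlib Require Import Reals Lra.
From Coquelicot Require Import Coquelicot.
Open Scope R_scope.

Fixpoint fsum (n : nat) (a : nat -> R) : R :=
  match n with
  | O => 0
  | S m => fsum m a + a m
  end.

Definition Gamma (n : nat) (p : nat -> R) : Prop :=
  (forall i, (i < n)%nat -> 0 < p i) /\ fsum n p = 1.

Definition Cf (f : R -> R) (n : nat) (p q : nat -> R) : R :=
  fsum n (fun i => q i * f (p i / q i)).

Definition Ef (f : R -> R) (n : nat) (p q : nat -> R) : R :=
  fsum n (fun i => (p i - q i) * Derive f (p i / q i)).

Definition xi (f : R -> R) (n : nat) (p q : nat -> R) : R := Ef f n p q - Cf f n p q.

Definition f_SG (x : R) : R := sqrt ((x ^ 2 + 1) / 2) - sqrt x.
Definition f_Delta (x : R) : R := (x - 1) ^ 2 / (x + 1).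

Definition M_SG_div := Cf f_SG.
Definition Delta_div := Cf f_Delta.
Definition xi_SG := xi f_SG.
Definition xi_Delta := xi f_Delta.

(* Main.v *)
Require Import Defs.
From Stdlib Require Import Reals Lra Psatz.
From Coquelicot Require Import Coquelicot.
Open Scope R_scope.

Lemma fsum_le n (a b : nat -> R) :
  (forall i, (i < n)%nat -> a i <= b i) -> fsum n a <= fsum n b.
Proof.
  induction n as [|n IH]; intros H; simpl; [lra|].
  assert (fsum n a <= fsum n b) by (apply IH; intros; apply H; lia).
  assert (a n <= b n) by (apply H; lia). lra.
Qed.

Lemma fsum_half n (a : nat -> R) : fsum n (fun i => a i / 2) = fsum n a / 2.
Proof. induction n; simpl; [lra|]. rewrite IHn. lra. Qed.

Lemma fsum_minus n (a b : nat -> R) : fsum n (fun i => a i - b i) = fsum n a - fsum n b.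
Proof. induction n; simpl; [lra|]. rewrite IHn. lra. Qed.

Lemma fsum_zero n : fsum n (fun _ => 0) = 0.
Proof. induction n; simpl; [lra|]. rewrite IHn. lra. Qed.

Lemma sq_le a b : 0 <= a -> 0 <= b -> a * a <= b * b -> a <= b.
Proof. intros; nra. Qed.

Lemma D_Delta x : 0 < x -> Derive f_Delta x = (x-1)*(x+3)/(x+1)^2.
Proof.
  intros Hx. apply is_derive_unique. unfold f_Delta. auto_derive.
  - lra.
  - field. lra.
Qed.

Lemma D_SG x : 0 < x -> Derive f_SG x = x / (2*sqrt ((x^2+1)/2)) - 1/(2*sqrt x).
Proof.
  intros Hx. apply is_derive_unique. unfold f_SG. auto_derive.
  - split; [nra|split; [lra|exact I]].
  - assert (0 < sqrt x) by (apply sqrt_lt_R0; lra).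
    assert (0 < sqrt ((x * (x * 1) + 1) * / 2)) by (apply sqrt_lt_R0; nra).
    replace ((x * (x * 1) + 1) * / 2) with ((x^2+1)/2) in * by (unfold Rdiv; ring).
    field. lra.
Qed.

Lemma point x : 0 < x ->
  0 <= f_Delta x /\ f_Delta x / 2 <= f_SG x /\
  0 <= (x-1) * Derive f_Delta x - f_Delta x /\
  ((x-1) * Derive f_Delta x - f_Delta x) / 2 <= (x-1) * Derive f_SG x - f_SG x.
Proof.
  intros Hx. rewrite D_Delta, D_SG by lra. unfold f_SG, f_Delta.
  set (t := sqrt x). set (s := sqrt ((x^2+1)/2)).
  assert (Ht : 0 < t) by (apply sqrt_lt_R0; lra).
  assert (Htt : t * t = x) by (apply sqrt_sqrt; lra).
  assert (Hs : 0 < s) by (apply sqrt_lt_R0; nra).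
  assert (Hss : s * s = (x^2+1)/2) by (apply sqrt_sqrt; nra).
  clearbody t s. subst x.
  assert (Hu : 0 < t*t+1) by nra.
  split; [|split; [|split]].
  - unfold Rdiv. apply Rmult_le_pos; [apply pow2_ge_0|]. apply Rlt_le, Rinv_0_lt_compat. lra.
  -
    set (A := 2*t*(t*t+1) + (t*t-1)^2).
    assert (HA : A <= 2*(t*t+1)*s).
    { apply sq_le; [unfold A; nra|nra|].
      assert (E : (2*(t*t+1)*s)*(2*(t*t+1)*s) - A*A = (t*t-1)^2*(t-1)^4).
      { replace ((2*(t*t+1)*s)*(2*(t*t+1)*s)) with (4*(t*t+1)^2*(s*s)) by ring.
        rewrite Hss. unfold A. field. }
      assert (0 <= (t*t-1)^2*(t-1)^4).
      { apply Rmult_le_pos; [apply pow2_ge_0|].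
        replace ((t-1)^4) with (((t-1)^2)^2) by ring. apply pow2_ge_0. }
      lra. }
    assert (E : s - t - (t*t-1)^2/(t*t+1)/2 = (2*(t*t+1)*s - A) / (2*(t*t+1))).
    { unfold A. field. lra. }
    assert (0 <= (2*(t*t+1)*s - A) / (2*(t*t+1))).
    { apply Rmult_le_pos; [lra|]. apply Rlt_le, Rinv_0_lt_compat. lra. }
    replace ((t * t - 1) ^ 2 / (t * t + 1) / 2) with ((t*t-1)^2/(t*t+1)/2) by reflexivity.
    lra.
  - replace ((t * t - 1) * ((t * t - 1) * (t * t + 3) / (t * t + 1) ^ 2) -
      (t * t - 1) ^ 2 / (t * t + 1)) with (2*((t*t-1)/(t*t+1))^2) by (field; lra).
    assert (0 <= ((t*t-1)/(t*t+1))^2) by apply pow2_ge_0. lra.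
  - set (k := (t*t+1)^3 - 2*t*(t*t-1)^2).
    assert (Hk : 0 < k).
    { unfold k. assert (0 <= (t-1)^2) by apply pow2_ge_0.
      assert ((t*t-1)^2 <= (t*t+1)^2) by nra.
      assert (2*t <= t*t+1) by nra.
      assert (2*t*(t*t-1)^2 <= (t*t+1)*(t*t+1)^2) by nra. nra. }
    assert (K : t*(t*t+1)^3 <= s*k).
    { apply sq_le; [nra|nra|].
      assert (E : (s*k)*(s*k) - (t*(t*t+1)^3)*(t*(t*t+1)^3) =
        (t-1)^6*(t+1)^2*(1+4*t^2+8*t^3+14*t^4+8*t^5+4*t^6+t^8)/2).
      { replace ((s*k)*(s*k)) with ((s*s)*(k*k)) by ring. rewrite Hss. unfold k. field. }
      assert (0 <= (t-1)^6*(t+1)^2*(1+4*t^2+8*t^3+14*t^4+8*t^5+4*t^6+t^8)/2).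
      { assert (0 <= (t-1)^6) by (replace ((t-1)^6) with (((t-1)^3)^2) by ring; apply pow2_ge_0).
        assert (0 <= (t+1)^2) by apply pow2_ge_0.
        assert (0 <= 1+4*t^2+8*t^3+14*t^4+8*t^5+4*t^6+t^8).
        { assert (0 < t^2) by nra. assert (0 < t^3) by (simpl; nra).
          assert (0<t^4) by nra. assert (0<t^5) by nra. assert (0<t^6) by nra. assert (0<t^8) by nra.
          lra. }
        apply Rmult_le_pos; [|lra]. apply Rmult_le_pos; [apply Rmult_le_pos|]; lra. }
      lra. }
    set (w := / s).
    assert (Hsw : s * w = 1) by (unfold w; field; lra).
    assert (Hw : 0 < w) by (unfold w; apply Rinv_0_lt_compat; lra).
    assert (Hsv : s = ((t*t)^2+1)/2 * w).
    { rewrite <- Hss. replace (s*s*w) with (s*(s*w)) by ring. rewrite Hsw. ring. }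
    assert (K' : t*(t*t+1)^3*w <= k).
    { replace k with (s*k*w) by (replace (s*k*w) with ((s*w)*k) by ring; rewrite Hsw; ring).
      apply Rmult_le_compat_r; lra. }
    assert (E : (t * t - 1) * (t * t / (2 * s) - 1 / (2 * t)) - (s - t)
       - ((t * t - 1) * ((t * t - 1) * (t * t + 3) / (t * t + 1) ^ 2) -
          (t * t - 1) ^ 2 / (t * t + 1)) / 2
       = (k - t*(t*t+1)^3*w) * (t*t+1) / (2*t*(t*t+1)^3)).
    { replace (t * t / (2 * s)) with (t*t*w/2) by (unfold w; field; lra).
      rewrite Hsv. unfold k. field. lra. }
    assert (0 <= (k - t*(t*t+1)^3*w) * (t*t+1) / (2*t*(t*t+1)^3)).
    { apply Rmult_le_pos; [nra|]. apply Rlt_le, Rinv_0_lt_compat.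
      apply Rmult_lt_0_compat; [lra|]. apply pow_lt; lra. }
    lra.
Qed.

Theorem proposition5p3 (n : nat) (p q : nat -> R) :
  (2 <= n)%nat -> Gamma n p -> Gamma n q ->
  (0 <= Delta_div n p q / 2 /\ Delta_div n p q / 2 <= M_SG_div n p q) /\
  (0 <= xi_Delta n p q / 2 /\ xi_Delta n p q / 2 <= xi_SG n p q).
Proof.
  intros _ [Hp _] [Hq _].
  assert (P : forall i, (i < n)%nat ->
    let x := p i / q i in
    0 <= q i * f_Delta x /\ q i * f_Delta x / 2 <= q i * f_SG x /\
    0 <= (p i - q i) * Derive f_Delta x - q i * f_Delta x /\
    ((p i - q i) * Derive f_Delta x - q i * f_Delta x) / 2 <=
      (p i - q i) * Derive f_SG x - q i * f_SG x).
  { intros i Hi x. pose proof (Hp i Hi). pose proof (Hq i Hi).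
    assert (Hx : 0 < x) by (unfold x; apply Rdiv_lt_0_compat; lra).
    replace (p i - q i) with (q i * (x - 1)) by (unfold x; field; lra).
    destruct (point x Hx) as (A1 & A2 & A3 & A4).
    split; [|split; [|split]]; nra. }
  unfold Delta_div, M_SG_div, xi_Delta, xi_SG, xi, Ef, Cf.
  rewrite <- !fsum_minus, <- !fsum_half.
  split; split.
  - rewrite <- (fsum_zero n) at 1. apply fsum_le. intros i Hi.
    destruct (P i Hi) as (A1 & _). lra.
  - apply fsum_le. intros i Hi. destruct (P i Hi) as (_ & A2 & _). lra.
  - rewrite <- (fsum_zero n) at 1. apply fsum_le. intros i Hi.
    destruct (P i Hi) as (_ & _ & A3 & _). lra.
  - apply fsum_le. intros i Hi. destruct (P i Hi) as (_ & _ & _ & A4). lra.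
Qed.
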